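(* Let $L:(0,\infty)\to(0,\infty)$ be slowly varying, and suppose there is $K>1$ such that $L$ is non-increasing and strictly less than $1$ on $[K,\infty)$. Then the condition $$-\int_K^\infty\frac{\log L(r)}{r(\log r)^2}\,dr<\infty$$ is equivalent to the following condition: for every $\delta>0$ there exists $K_1=K_1(\delta)>K$ such that for all $r>K_1$, $$\sum_{k=1}^\infty\frac{\log L(r^{2^k})}{2^k\log r}>-\delta,$$ and therefore $\prod_{k=1}^\infty [L(r^{2^k})]^{2^{-k}}>r^{-\delta}$.
   Context: A function $L$ is slowly varying if $L(cr)/L(r)\to1$ as $r\to\infty$ for every $c>0$. *)

(* Defs.v *)
From HB Require Import structures.
From mathcomp Require Import all_boot all_order all_algebra.
From mathcomp Require Import all_classical all_reals all_analysis.
Set Implicit Arguments. Unset Strict Implicit. Unset Printing Implicit Defensive.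
Import Order.TTheory GRing.Theory Num.Theory.
Import numFieldNormedType.Exports.
Local Open Scope classical_set_scope.
Local Open Scope ring_scope.

Definition slowly_varying (R : realType) (L : R -> R) : Prop :=
  forall c : R, 0 < c -> (fun r => L (c * r) / L r) @ +oo --> (1 : R).

(* Main.v *)
Require Import Defs.
From HB Require Import structures.
From mathcomp Require Import all_boot all_order all_algebra.
From mathcomp Require Import all_classical all_reals all_analysis.
From mathcomp Require Import ring lra measurable_realfun.
Import Order.TTheory GRing.Theory Num.Theory.
Import numFieldNormedType.Exports.
Local Open Scope classical_set_scope.
Local Open Scope ring_scope.

Set Implicit Arguments. Unset Strict Implicit. Unset Printing Implicit Defensive.

Section S.
Context {R : realType}.
Notation mu := (@lebesgue_measure R).

Definition hh (x : R) := (x * ln x ^+ 2)^-1.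
Definition FF (x : R) := - (ln x)^-1.

Lemma FF_derive (x : R) : 1 < x -> is_derive x 1 FF (hh x).
Proof.
move=> x1.
have x0 : 0 < x by apply: lt_trans x1.
have lnx0 : ln x != 0 by rewrite gt_eqF// ln_gt0.
have dln : derivable (@ln R) x 1 by apply: ex_derive; exact: is_derive1_ln.
apply: DeriveDef.
  by apply: derivableN; apply: derivableV.
rewrite deriveN; last by apply: derivableV.
rewrite deriveV// (@derive_val _ _ _ _ _ _ _ (is_derive1_ln x0)) /hh.
rewrite scaleNr opprK.
have -> : ln x ^- 2 *: x^-1 = ln x ^- 2 * x^-1 by [].
have xn0 : x != 0 by rewrite gt_eqF.
by field; rewrite xn0 lnx0.
Qed.


Lemma hh_cont (t : R) : 1 < t -> {for t, continuous hh}.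
Proof.
move=> t1; have t0 : 0 < t by apply: lt_trans t1.
apply: continuousV.
  by rewrite mulf_neq0// ?gt_eqF// exprn_gt0// ln_gt0.
apply: continuousM; first exact: cvg_id.
apply: (@continuous_comp _ _ _ (@ln R) (fun z => z ^+ 2)).
  exact: continuous_ln.
exact: exprn_continuous.
Qed.

Lemma FF_cont (t : R) : 1 < t -> {for t, continuous FF}.
Proof.
move=> t1; apply/differentiable_continuous; rewrite -derivable1_diffP.
by apply: ex_derive; exact: FF_derive.
Qed.

Lemma int_hh (x y : R) : 1 < x -> x < y ->
  (\int[mu]_(t in `[x, y]) (hh t)%:E = (FF y)%:E - (FF x)%:E)%E.
Proof.
move=> x1 xy; apply: continuous_FTC2 => //.
- apply: continuous_in_subspaceT => t; rewrite inE/= in_itv/= => /andP[xt _].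
  by apply: hh_cont; apply: lt_le_trans xt.
- split.
  + move=> t; rewrite in_itv/= => /andP[xt _].
    by apply: ex_derive; apply: FF_derive; apply: lt_trans xt.
  + by apply: cvg_at_right_filter; apply: FF_cont.
  + by apply: cvg_at_left_filter; apply: FF_cont; apply: lt_trans xy.
- move=> t; rewrite in_itv/= => /andP[xt _].
  have t1 : 1 < t by apply: lt_trans xt.
  by rewrite derive1E (@derive_val _ _ _ _ _ _ _ (FF_derive t1)).
Qed.

Lemma hh_gt0 (t : R) : 1 < t -> 0 < hh t.
Proof.
move=> t1; have t0 : 0 < t by apply: lt_trans t1.
by rewrite /hh invr_gt0 mulr_gt0// exprn_gt0// ln_gt0.
Qed.

Lemma mhh (D : set R) : measurable D -> D `<=` `]1, +oo[ -> measurable_fun D hh.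
Proof.
move=> mD D1; apply: (measurable_funS _ D1) => //.
apply: open_continuous_measurable_fun; first exact: interval_open.
move=> t; rewrite inE/= in_itv/= andbT; exact: hh_cont.
Qed.

Lemma int_hh_co (x y : R) : 1 < x -> x <= y ->
  (\int[mu]_(t in `[x, y[) (hh t)%:E = ((ln x)^-1 - (ln y)^-1)%:E)%E.
Proof.
move=> x1; rewrite le_eqVlt => /predU1P[<-|xy].
  by rewrite set_itvco0 integral_set0 subrr.
rewrite integral_itv_bndo_bndc; last first.
  apply/measurable_EFinP; apply: mhh => // t /=; rewrite !in_itv/= andbT => /andP[xt _].
  exact: lt_le_trans xt.
by rewrite int_hh// /FF -EFinB opprK addrC.
Qed.

End S.

Lemma ereal_split {R : realType} (a b J : \bar R) : (0 <= a)%E -> (0 <= b)%E ->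
  J = (a + b)%E -> (J < +oo)%E ->
  exists ra rb : R, [/\ a = ra%:E, b = rb%:E, J = (ra + rb)%:E, 0 <= ra & 0 <= rb].
Proof.
case: a => [ra| |] //; case: b => [rb| |] //= ra0 rb0 -> //.
by exists ra, rb; split.
Qed.

Section Pow.
Context {R : realType}.
Implicit Types r : R.

Lemma A_gt1 r k : 1 < r -> 1 < r ^+ (2 ^ k)%N.
Proof. by move=> r1; rewrite exprn_egt1// -lt0n expn_gt0. Qed.

Lemma A_mono r m n : 1 < r -> (m <= n)%N -> r ^+ (2 ^ m)%N <= r ^+ (2 ^ n)%N.
Proof. by move=> r1 mn; rewrite ler_eXn2l// leq_pexp2l. Qed.

Lemma A_S r k : r ^+ (2 ^ k.+1)%N = (r ^+ (2 ^ k)%N) ^+ 2.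
Proof. by rewrite expnS mulnC exprM. Qed.

Lemma A_ge r k : 1 < r -> r <= r ^+ (2 ^ k)%N.
Proof. by move=> r1; rewrite -[X in X <= _]expr1 ler_eXn2l// -[1%N](expn0 2) leq_pexp2l. Qed.

Lemma lnA r k : 0 < r -> ln (r ^+ (2 ^ k)%N) = 2 ^+ k * ln r.
Proof. by move=> r0; rewrite lnXn// -[in LHS]mulr_natr natrX mulrC. Qed.

Lemma ln_sq r : 0 < r -> ln (r ^+ 2) = 2 * ln r.
Proof. by move=> r0; rewrite lnXn// mulr2n mulrDl !mul1r. Qed.

Lemma A_unbounded r (y : R) : 1 < r -> exists m, y <= r ^+ (2 ^ m)%N.
Proof.
move=> r1; have r0 : 0 < r by apply: lt_trans r1.
have lr0 : 0 < ln r by rewrite ln_gt0.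
have [y0|y0] := leP y 0.
  by exists 0%N; apply: (le_trans y0); rewrite ltW// (lt_trans _ (A_gt1 0 r1)).
exists (Num.truncn (ln y / ln r)).
rewrite -ler_ln ?posrE// ?exprn_gt0// lnA//.
have := truncnS_gt (ln y / ln r); set m := Num.truncn _ => hm.
rewrite -ler_pdivrMr//; apply: ltW; apply: (lt_le_trans hm).
rewrite -natrX ler_nat; exact: ltn_expl.
Qed.

End Pow.

Lemma limn_noninc {R : realType} (v : nat -> \bar R) :
  nonincreasing_seq v -> limn v = ereal_inf (range v).
Proof. by move=> nv; apply/cvg_lim => //; exact: ereal_nonincreasing_cvgn. Qed.

Section Main.
Context {R : realType} (L : R -> R) (K : R).
Hypothesis Lpos : forall r, 0 < r -> 0 < L r.
Hypothesis K1 : 1 < K.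
Hypothesis Lni : forall x y, K <= x -> x <= y -> L y <= L x.
Hypothesis Llt1 : forall x, K <= x -> L x < 1.
Notation mu := (@lebesgue_measure R).

Definition aa (t : R) := - ln (L t).
Definition gg (t : R) := aa t * hh t.

Let K0 : 0 < K. Proof. by apply: lt_trans K1. Qed.

Lemma aa_gt0 t : K <= t -> 0 < aa t.
Proof.
move=> Kt; have t0 : 0 < t by apply: lt_le_trans Kt.
by rewrite /aa oppr_gt0 ln_lt0// Lpos//= Llt1.
Qed.

Lemma aa_mono s t : K <= s -> s <= t -> aa s <= aa t.
Proof.
move=> Ks st; have Kt := le_trans Ks st.
rewrite /aa lerN2 ler_ln ?posrE ?Lpos//; first exact: Lni.
  by apply: lt_le_trans Kt.
by apply: lt_le_trans Ks.
Qed.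

Lemma gg_ge0 t : K <= t -> 0 <= gg t.
Proof.
move=> Kt; rewrite /gg mulr_ge0// ?ltW ?aa_gt0//.
by apply: hh_gt0; apply: lt_le_trans Kt.
Qed.

Lemma mgg (D : set R) : measurable D -> D `<=` `[K, +oo[ ->
  measurable_fun D (EFin \o gg).
Proof.
move=> mD DK; apply/measurable_EFinP; apply: measurable_funM.
  apply: measurableT_comp; first exact: measurable_funN.
  apply: measurableT_comp; first exact: measurable_ln.
  have mL' : measurable_fun D (fun t => L (Num.max t K)).
    apply: nonincreasing_measurable => // s t st.
    apply: Lni; first by rewrite le_max lexx orbT.
    by rewrite ge_max !le_max st lexx !orbT.
  apply: eq_measurable_fun mL' => t; rewrite inE => /DK; rewrite /= in_itv/= andbT => Kt.
  by rewrite max_l.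
apply: mhh => // t /DK; rewrite /= !in_itv/= !andbT; exact: lt_le_trans.
Qed.

Lemma disj_adj (a b : itv_bound R) (y : R) :
  [disjoint [set` Interval a (BLeft y)] & [set` Interval (BLeft y) b]].
Proof.
rewrite disj_set2E; apply/eqP/seteqP; split => t //= [].
rewrite !itv_boundlr => /andP[_] ty /andP[yt _].
by move: ty yt; rewrite !bnd_simp => ty yt; move: (lt_le_trans ty yt); rewrite ltxx.
Qed.

Notation II D := (\int[mu]_(t in D) (gg t)%:E)%E.

Lemma split_inf (x y : R) : K <= x -> x <= y ->
  II `[x, +oo[ = (II `[x, y[ + II `[y, +oo[)%E.
Proof.
move=> Kx xy.
have sub : `[x, +oo[ `<=` `[K, +oo[.
  by move=> t; rewrite /= !in_itv/= !andbT; exact: le_trans.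
rewrite (@itv_bndbnd_setU _ _ _ (BLeft y)) ?bnd_simp//.
rewrite ge0_integral_setU//.
- rewrite -itv_bndbnd_setU ?bnd_simp//; exact: mgg.
- rewrite -itv_bndbnd_setU ?bnd_simp// => t /sub /=; rewrite in_itv/= andbT lee_fin.
  exact: gg_ge0.
- exact: disj_adj.
Qed.

Lemma split_fin (x y z : R) : K <= x -> x <= y -> y <= z ->
  II `[x, z[ = (II `[x, y[ + II `[y, z[)%E.
Proof.
move=> Kx xy yz.
have sub : `[x, z[ `<=` `[K, +oo[.
  by move=> t; rewrite /= !in_itv/= !andbT => /andP[+ _]; exact: le_trans.
rewrite (@itv_bndbnd_setU _ _ _ (BLeft y)) ?bnd_simp//.
rewrite ge0_integral_setU//.
- rewrite -itv_bndbnd_setU ?bnd_simp//; exact: mgg.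
- rewrite -itv_bndbnd_setU ?bnd_simp// => t /sub /=; rewrite in_itv/= andbT lee_fin.
  exact: gg_ge0.
- exact: disj_adj.
Qed.

Lemma co_sub (x y : R) : 1 < x -> `[x, y[ `<=` `]1, +oo[.
Proof.
by move=> x1 t; rewrite /= !in_itv/= andbT => /andP[xt _]; exact: lt_le_trans xt.
Qed.

Lemma lower_piece (x y : R) : K <= x -> x <= y ->
  ((aa x * ((ln x)^-1 - (ln y)^-1))%:E <= II `[x, y[)%E.
Proof.
move=> Kx xy; have x1 : 1 < x by apply: lt_le_trans Kx.
rewrite EFinM -int_hh_co// -ge0_integralZl_EFin//; last 3 first.
- by move=> t /(co_sub x1) /=; rewrite in_itv/= andbT lee_fin => /hh_gt0/ltW.
- by apply/measurable_EFinP; apply: mhh => //; exact: co_sub.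
- by apply/ltW/aa_gt0.
apply: ge0_le_integral => //.
- move=> t /(co_sub x1) /=; rewrite in_itv/= andbT lee_fin => /hh_gt0/ltW h0.
  by rewrite mulr_ge0// ltW// aa_gt0.
- by apply/measurable_EFinP; apply: measurable_funM => //;
    apply: mhh => //; exact: co_sub.
- by apply: mgg => // t /=; rewrite !in_itv/= andbT => /andP[xt _]; exact: le_trans xt.
- move=> t /= /[dup] /(co_sub x1) /=; rewrite !in_itv/= andbT => /hh_gt0/ltW h0 /andP[xt _].
  by rewrite lee_fin /gg ler_wpM2r// aa_mono.
Qed.

Lemma upper_piece (x y : R) : K <= x -> x <= y ->
  (II `[x, y[ <= (aa y * ((ln x)^-1 - (ln y)^-1))%:E)%E.
Proof.
move=> Kx xy; have x1 : 1 < x by apply: lt_le_trans Kx.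
rewrite EFinM -int_hh_co// -ge0_integralZl_EFin//; last 3 first.
- by move=> t /(co_sub x1) /=; rewrite in_itv/= andbT lee_fin => /hh_gt0/ltW.
- by apply/measurable_EFinP; apply: mhh => //; exact: co_sub.
- by apply/ltW/aa_gt0/(le_trans Kx).
apply: ge0_le_integral => //.
- move=> t /= /[dup] /(co_sub x1) /=; rewrite in_itv/= andbT lee_fin => /hh_gt0/ltW h0.
  rewrite in_itv/= => /andP[xt _].
  by rewrite mulr_ge0// ltW// aa_gt0// (le_trans Kx).
- by apply: mgg => // t /=; rewrite !in_itv/= andbT => /andP[xt _]; exact: le_trans xt.
- by apply/measurable_EFinP; apply: measurable_funM => //;
    apply: mhh => //; exact: co_sub.
- move=> t /= /[dup] /(co_sub x1) /=; rewrite !in_itv/= andbT => /hh_gt0/ltW h0 /andP[xt ty].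
  by rewrite lee_fin /gg ler_wpM2r// aa_mono// ?(le_trans Kx)// ltW.
Qed.

Lemma int_lim :
  II `[K, +oo[ = ereal_sup (range (fun n : nat => II `[K, (K + n%:R)%R[)).
Proof.
pose F (n : nat) := `[K, K + n%:R[%classic.
have ndF : nondecreasing_seq F.
  move=> m n mn; rewrite subsetEset => t; rewrite /F/= !in_itv/= => /andP[-> tm] /=.
  by apply: (lt_le_trans tm); rewrite lerD2l ler_nat.
have mF n : measurable (F n) by exact: measurable_itv.
have sF n : F n `<=` `[K, +oo[.
  by move=> t; rewrite /F/= !in_itv/= andbT => /andP[].
have UF : \bigcup_n F n = `[K, +oo[%classic.
  apply/seteqP; split; first by move=> t [n _ /sF].
  move=> t /=; rewrite in_itv/= andbT => Kt.
  exists (Num.truncn (t - K)).+1 => //=; rewrite /F/= in_itv/= Kt/=.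
  by rewrite -ltrBlDl truncnS_gt.
have f0 n t : F n t -> (0 <= (EFin \o gg) t)%E.
  by move=> /sF /=; rewrite in_itv/= andbT lee_fin; exact: gg_ge0.
have h : II (F i) @[i --> \oo] --> II (\bigcup_i F i).
  by apply: ge0_nondecreasing_set_cvg_integral => // n; exact: mgg.
rewrite UF in h.
have h2 : II (F i) @[i --> \oo] --> ereal_sup (range (fun i => II (F i))).
  apply: ereal_nondecreasing_cvgn.
  by apply: ge0_nondecreasing_set_nondecreasing_integral => // n; exact: mgg.
exact: (cvg_unique _ h h2).
Qed.

Lemma II_ge0 (D : set R) : D `<=` `[K, +oo[ -> (0 <= II D)%E.
Proof.
move=> DK; apply: integral_ge0 => t /DK /=; rewrite in_itv/= andbT lee_fin.
exact: gg_ge0.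
Qed.

Lemma sub_co (x y : R) : K <= x -> `[x, y[ `<=` `[K, +oo[.
Proof. by move=> Kx t; rewrite /= !in_itv/= andbT => /andP[xt _]; exact: le_trans xt. Qed.

Lemma sub_cy (x : R) : K <= x -> `[x, +oo[ `<=` `[K, +oo[.
Proof. by move=> Kx t; rewrite /= !in_itv/= !andbT; exact: le_trans. Qed.

Lemma tail_small : (II `[K, +oo[ < +oo)%E -> forall e : R, 0 < e ->
  exists X, K <= X /\ (II `[X, +oo[ <= e%:E)%E.
Proof.
move=> Jfin e e0.
have J0 : (0 <= II `[K, +oo[)%E by apply: II_ge0.
have Jf : II `[K, +oo[ \is a fin_num by rewrite ge0_fin_numE.
have : (II `[K, +oo[ - e%:E < II `[K, +oo[)%E by rewrite lteBlDr// lteDl// lte_fin.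
rewrite {2}int_lim => /ereal_sup_gt [_ [n _ <-]] hn.
exists (K + n%:R); split; first by rewrite lerDl.
have Kn : K <= K + n%:R by rewrite lerDl.
have := split_inf (lexx K) Kn.
move/ereal_split => /(_ (II_ge0 (@sub_co K (K + n%:R) (lexx K))) (II_ge0 (sub_cy Kn))).
move=> /(_ Jfin) [ra [rb [Ea Eb EJ _ _]]].
move: hn; rewrite EJ Ea Eb -EFinB !lte_fin lee_fin => ?; lra.
Qed.

Lemma inv_diff (x : R) : 1 < x -> (ln x)^-1 - (ln (x ^+ 2))^-1 = (ln x)^-1 / 2.
Proof.
move=> x1; rewrite ln_sq ?(lt_trans _ x1)//.
have lx : ln x != 0 by rewrite gt_eqF// ln_gt0.
by field; rewrite lx.
Qed.

Lemma piece_lo (x : R) : K <= x -> (((aa x / ln x) / 2)%:E <= II `[x, (x ^+ 2)%R[)%E.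
Proof.
move=> Kx; have x1 : 1 < x by apply: lt_le_trans Kx.
have := lower_piece Kx (@ler_eXnr _ x 2 erefl (ltW x1)).
by rewrite inv_diff// mulrA.
Qed.

Lemma piece_hi (x : R) : K <= x -> (II `[x, (x ^+ 2)%R[ <= (aa (x ^+ 2) / ln (x ^+ 2))%:E)%E.
Proof.
move=> Kx; have x1 : 1 < x by apply: lt_le_trans Kx.
have := upper_piece Kx (@ler_eXnr _ x 2 erefl (ltW x1)).
rewrite inv_diff// ln_sq ?(lt_trans _ x1)//.
have lx : ln x != 0 by rewrite gt_eqF// ln_gt0.
suff -> : (ln x)^-1 / 2 = (2 * ln x)^-1 by [].
by field; rewrite lx.
Qed.

Definition cc (r : R) (k : nat) := aa (r ^+ (2 ^ k)%N) / ln (r ^+ (2 ^ k)%N).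

Lemma KA (r : R) k : K <= r -> K <= r ^+ (2 ^ k)%N.
Proof. by move=> Kr; apply: (le_trans Kr); apply: A_ge; apply: lt_le_trans Kr. Qed.

Lemma cc_ge0 (r : R) k : K <= r -> 0 <= cc r k.
Proof.
move=> Kr; have r1 : 1 < r by apply: lt_le_trans Kr.
by rewrite /cc divr_ge0// ?ltW ?aa_gt0 ?KA// ln_gt0// A_gt1.
Qed.

Lemma sum_lo (r : R) n : K <= r ->
  ((\sum_(1 <= k < n.+1) (cc r k / 2))%:E <= II `[(r ^+ (2 ^ 1)%N)%R, (r ^+ (2 ^ n.+1)%N)%R[)%E.
Proof.
move=> Kr; have r1 : 1 < r by apply: lt_le_trans Kr.
elim: n => [|n IH].
  by rewrite big_geq//; apply: II_ge0; apply: sub_co; exact: KA.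
rewrite big_nat_recr//= EFinD (@split_fin _ (r ^+ (2 ^ n.+1)%N)) ?KA// ?A_mono//.
apply: leeD => //; rewrite (A_S r n.+1); apply: piece_lo; exact: KA.
Qed.

Lemma sum_hi (r : R) n : K <= r ->
  (II `[(r ^+ (2 ^ 1)%N)%R, (r ^+ (2 ^ n.+1)%N)%R[ <= (\sum_(1 <= k < n.+1) cc r k.+1)%:E)%E.
Proof.
move=> Kr; have r1 : 1 < r by apply: lt_le_trans Kr.
elim: n => [|n IH].
  by rewrite big_geq// set_itvco0 integral_set0.
rewrite big_nat_recr//= EFinD (@split_fin _ (r ^+ (2 ^ n.+1)%N)) ?KA// ?A_mono//.
apply: leeD => //; rewrite (A_S r n.+1) /cc (A_S r n.+1); apply: piece_hi; exact: KA.
Qed.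

Definition term (r : R) (k : nat) := ln (L (r ^+ (2 ^ k)%N)) / (2 ^+ k * ln r).

Lemma term_eq (r : R) k : K <= r -> term r k = - cc r k.
Proof.
move=> Kr; have r0 : 0 < r by apply: lt_le_trans Kr.
rewrite /term /cc /aa lnA//.
by rewrite mulNr opprK.
Qed.

Definition SS (r : R) (n : nat) := \sum_(1 <= k < n) cc r k.

Lemma SS_ge0 (r : R) n : K <= r -> 0 <= SS r n.
Proof. by move=> Kr; apply: sumr_ge0 => k _; exact: cc_ge0. Qed.

Lemma SS_nd (r : R) : K <= r -> forall n, SS r n <= SS r n.+1.
Proof.
move=> Kr [|n]; first by rewrite /SS !big_geq.
by rewrite /SS [X in _ <= X]big_nat_recr//= lerDl cc_ge0.
Qed.

Lemma ser_eq (r : R) : K <= r ->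
  limn (fun n => (\sum_(1 <= k < n) (term r k)%:E)%E) =
  ereal_inf (range (fun n => (- SS r n)%:E)).
Proof.
move=> Kr.
have -> : (fun n => (\sum_(1 <= k < n) (term r k)%:E)%E) = (fun n => (- SS r n)%:E).
  apply/funext => n; rewrite sumEFin /SS -sumrN; congr EFin.
  by apply: eq_bigr => k _; rewrite term_eq.
apply: limn_noninc; apply/nonincreasing_seqP => n.
by rewrite lee_fin lerN2 SS_nd.
Qed.

Lemma II_sub (X a b : R) : K <= X -> X <= a ->
  (II `[a, b[ <= II `[X, +oo[)%E.
Proof.
move=> KX Xa; apply: ge0_subset_integral => //.
- exact: mgg (sub_cy KX).
- by move=> t /(sub_cy KX) /=; rewrite in_itv/= andbT lee_fin; exact: gg_ge0.
- by move=> t /=; rewrite !in_itv/= andbT => /andP[+ _]; exact: le_trans.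
Qed.

Lemma dir1 : (II `[K, +oo[ < +oo)%E -> forall delta : R, 0 < delta ->
  exists K1 : R, K < K1 /\ forall r : R, K1 < r ->
  ((- delta)%:E < limn (fun n => (\sum_(1 <= k < n) (term r k)%:E)%E))%E.
Proof.
move=> Jf d d0.
have d4 : 0 < d / 4 by lra.
have [X [KX HX]] := tail_small Jf d4.
have mX : X <= Num.max X K by rewrite le_max lexx.
have mK : K <= Num.max X K by rewrite le_max lexx orbT.
exists (Num.max X K + 1); split; first by lra.
move=> r Hr.
have Xr : X <= r by lra.
have Kr : K <= r by lra.
have r1 : 1 < r by apply: lt_le_trans Kr.
rewrite ser_eq//; apply: (@lt_le_trans _ _ (- (d / 2))%:E).
  by rewrite lte_fin; lra.
apply: le_ereal_inf_tmp => _ [n _ <-]; rewrite lee_fin lerN2.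
case: n => [|m]; first by rewrite /SS big_geq//; lra.
have h1 := sum_lo m Kr.
have h2 := II_sub (r ^+ (2 ^ m.+1)%N) KX (le_trans Xr (A_ge 1 r1)).
have := le_trans h1 (le_trans h2 HX).
by rewrite -mulr_suml lee_fin -/(SS r m.+1) => ?; lra.
Qed.

Lemma II_le (D D' : set R) : measurable D -> measurable D' -> D `<=` D' ->
  D' `<=` `[K, +oo[ -> (II D <= II D')%E.
Proof.
move=> mD mD' DD' D'K; apply: ge0_subset_integral => //.
- exact: mgg D'K.
- by move=> t /D'K /=; rewrite in_itv/= andbT lee_fin; exact: gg_ge0.
Qed.

Lemma dir2 : (forall delta : R, 0 < delta ->
  exists K1 : R, K < K1 /\ forall r : R, K1 < r ->
  ((- delta)%:E < limn (fun n => (\sum_(1 <= k < n) (term r k)%:E)%E))%E) ->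
  (II `[K, +oo[ < +oo)%E.
Proof.
move=> H; have [K1' [KK1 HK1]] := H 1 ltr01.
have Kr : K <= K1' + 1 by lra.
set r := K1' + 1 in Kr.
have r1 : 1 < r by apply: lt_le_trans Kr.
have Kr1 : K1' < r by rewrite /r; lra.
have hr := HK1 r Kr1.
rewrite ser_eq// in hr.
have Sb n : SS r n < 1.
  have := lt_le_trans hr (ereal_inf_lbound (ex_intro2 _ _ n I erefl)).
  by rewrite lte_fin; lra.
set A1 := (r ^+ (2 ^ 1)%N)%R.
have KA1 : K <= A1 by exact: KA.
pose C0 := aa A1 * ((ln K)^-1 - (ln A1)^-1).
rewrite int_lim; apply: (@le_lt_trans _ _ (C0 + 1)%:E); last exact: ltry.
apply: ge_ereal_sup => _ [n _ <-].
have [m Hm] := A_unbounded (K + n%:R) r1.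
have Hm' : K + n%:R <= r ^+ (2 ^ m.+1)%N.
  by apply: (le_trans Hm); apply: A_mono => //; exact: leqnSn.
have Am : A1 <= r ^+ (2 ^ m.+1)%N by apply: A_mono.
apply: (@le_trans _ _ (II `[K, (r ^+ (2 ^ m.+1)%N)%R[)).
  apply: II_le => //; last exact: sub_co.
  by move=> t /=; rewrite !in_itv/= => /andP[-> tn] /=; apply: (lt_le_trans tn).
rewrite (split_fin (lexx K) KA1 Am) EFinD.
apply: leeD; first exact: upper_piece.
apply: (le_trans (sum_hi m Kr)); rewrite lee_fin.
have := Sb m.+2; rewrite /SS big_nat_recl//.
have := cc_ge0 1 Kr; lra.
Qed.

Lemma prod_eq (r : R) n : K <= r ->
  (\big[*%E/1%E]_(1 <= k < n) ((L (r ^+ (2 ^ k)%N)) `^ (2 ^- k))%:E)%E =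
  (expR (- (ln r * SS r n)))%:E.
Proof.
move=> Kr; have r0 : 0 < r by apply: lt_le_trans Kr.
have lr : ln r != 0 by rewrite gt_eqF// ln_gt0// (lt_le_trans K1).
rewrite prodEFin; congr EFin.
rewrite /SS mulr_sumr -sumrN expR_sum; apply: eq_bigr => k _.
have LA : L (r ^+ (2 ^ k)%N) != 0 by rewrite gt_eqF// Lpos// exprn_gt0.
rewrite /powR (negbTE LA); congr expR.
rewrite -mulrN -term_eq// /term.
have t2 : (2 : R) ^+ k != 0 by rewrite expf_neq0.
by field; rewrite lr t2.
Qed.

Lemma dir3 (delta : R) : 0 < delta -> forall K1 : R, K < K1 ->
  (forall r : R, K1 < r ->
     ((- delta)%:E < limn (fun n => (\sum_(1 <= k < n) (term r k)%:E)%E))%E) ->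
  forall r : R, K1 < r ->
   ((r `^ (- delta))%:E <
    limn (fun n => \big[*%E/1%E]_(1 <= k < n) ((L (r ^+ (2 ^ k)%N)) `^ (2 ^- k))%:E))%E.
Proof.
move=> d0 K1' KK1 H r Hr.
have Kr : K <= r by apply/ltW/(lt_trans KK1).
have r0 : 0 < r by apply: lt_le_trans Kr.
have lr0 : 0 < ln r by rewrite ln_gt0// (lt_le_trans K1).
have := H r Hr; rewrite ser_eq//.
have lb n : (ereal_inf (range (fun n => (- SS r n)%:E)) <= (- SS r n)%:E)%E.
  by apply: ereal_inf_lbound; exists n.
have ub : (ereal_inf (range (fun n => (- SS r n)%:E)) <= 0)%E.
  by apply: le_trans (lb 0%N) _; rewrite /SS big_geq// oppr0.
move: ub lb; case: (ereal_inf _) => [s| |] //= sub slb hs.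
rewrite lte_fin in hs.
under eq_fun do rewrite prod_eq//.
rewrite limn_noninc; last first.
  apply/nonincreasing_seqP => n; rewrite lee_fin ler_expR lerN2.
  by apply: ler_wpM2l; [exact: ltW | exact: SS_nd].
apply: (@lt_le_trans _ _ (expR (ln r * s))%:E).
  rewrite lte_fin /powR gt_eqF// ltr_expR.
  by rewrite mulrC ltr_pM2l.
apply: le_ereal_inf_tmp => _ [n _ <-]; rewrite lee_fin ler_expR -mulrN.
by apply: ler_wpM2l; [exact: ltW | have := slb n; rewrite lee_fin].
Qed.

End Main.

Theorem lemma3p4 (R : realType) (L : R -> R) (K : R) :
  (forall r, 0 < r -> 0 < L r) ->
  slowly_varying L ->
  1 < K ->
  (forall x y, K <= x -> x <= y -> L y <= L x) ->
  (forall x, K <= x -> L x < 1) ->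
  ((\int[lebesgue_measure]_(r in `[K, +oo[)
        ((- ln (L r)) / (r * (ln r) ^+ 2))%:E < +oo)%E
   <->
   (forall delta : R, 0 < delta -> exists K1 : R, K < K1 /\
      forall r : R, K1 < r ->
        ((- delta)%:E <
         \sum_(1 <= k <oo) (ln (L (r ^+ (2 ^ k)%N)) / (2 ^+ k * ln r))%:E)%E))
  /\
  (forall delta : R, 0 < delta -> forall K1 : R, K < K1 ->
     (forall r : R, K1 < r ->
        ((- delta)%:E <
         \sum_(1 <= k <oo) (ln (L (r ^+ (2 ^ k)%N)) / (2 ^+ k * ln r))%:E)%E) ->
     forall r : R, K1 < r ->
       ((r `^ (- delta))%:E <
        \big[*%E/1%E]_(1 <= k <oo) ((L (r ^+ (2 ^ k)%N)) `^ (2 ^- k))%:E)%E).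
Proof.
move=> Lpos _ K1 Lni Llt1; split.
  split.
    by move=> Jf; exact: (dir1 Lpos K1 Lni Llt1 Jf).
  by move=> H; exact: (dir2 Lpos K1 Lni Llt1 H).
by move=> d d0 K1' KK H r Hr; exact: (dir3 Lpos K1 Llt1 d0 KK H Hr).
Qed.
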